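(* Every right coideal $\mathcal{X}$ of $\mathcal{U}$ is the direct sum $\mathcal{X}=\bigoplus_{\mu\in\mathbb{C}^\times}[\mathcal{X}]_\mu$ of its homogeneous components $[\mathcal{X}]_\mu:=\mathcal{X}\cap[\mathcal{U}]_\mu$, where $[\mathcal{U}]_\mu:=\mathrm{Lin}\{F^{(i)}f_\mu E^{(j)}G^{(k)}: i,j,k\in\mathbb{N}_0\}$.
   Context: Let $q\in\mathbb{C}$ be transcendental (in particular $q\ne0$ and not a root of unity). $\mathcal{U}$ is the unital algebra generated by $E,F,G$ and $f_\mu$ ($\mu\in\mathbb{C}^\times$) with relations $f_\mu f_\nu=f_{\mu\nu}$, $f_\mu E=\mu^2Ef_\mu$, $f_\mu F=\mu^{-2}Ff_\mu$, $f_\mu G=Gf_\mu$, $GE=E(G+2)$, $GF=F(G-2)$, $EF-FE=(f_q-f_{q^{-1}})/(q-q^{-1})$; $f_1=1$. Fix $q^{1/2}$ and put $K=f_{q^{1/2}}$. $\mathcal{U}$ is a Hopf algebra with $\Delta E=E\otimes K+K^{-1}\otimes E$, $\Delta F=F\otimes K+K^{-1}\otimes F$, $\Delta G=1\otimes G+G\otimes1$, $\Delta f_\mu=f_\mu\otimes f_\mu$. Let $[k]=(q^k-q^{-k})/(q-q^{-1})$, $[k]!=[k]\cdots[1]$, $[0]!=1$, and $F^{(k)}=F^kK^{-k}/[k]!$, $E^{(k)}=K^{-k}E^k/[k]!$, $G^{(k)}=G^k/k!$. The elements $F^{(i)}f_\mu E^{(j)}G^{(k)}$ form a basis of $\mathcal{U}$.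 A right coideal is a subspace $\mathcal{X}$ with $\Delta(\mathcal{X})\subset\mathcal{X}\otimes\mathcal{U}$. *)

(* Defs.v *)
From HB Require Import structures.
From mathcomp Require Import all_boot all_order all_algebra.
From mathcomp Require Import complex Rstruct.
Set Implicit Arguments. Unset Strict Implicit. Unset Printing Implicit Defensive.
Import Order.TTheory GRing.Theory Num.Theory.
Local Open Scope ring_scope.

Definition C : numClosedFieldType := complex Rdefinitions.R.

Definition transcendental (q : C) : Prop :=
  forall p : {poly rat}, p != 0 -> ~~ root (map_poly ratr p) q.

Definition qint (q : C) (k : nat) : C := (q ^+ k - q^-1 ^+ k) / (q - q^-1).
Definition qfact (q : C) (k : nat) : C := \prod_(1 <= l < k.+1) qint q l.

Section Generators.
Variables (A : algType C) (q s : C) (E F G : A) (f : C -> A).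
(* s is the fixed square root q^{1/2}; K = f_{q^{1/2}}, Km = K^{-1} = f_{q^{-1/2}} *)
Definition Kel : A := f s.
Definition Kinv : A := f s^-1.

Definition U_relations : Prop :=
  [/\ forall mu nu, mu != 0 -> nu != 0 -> f mu * f nu = f (mu * nu),
      f 1 = 1,
   [/\ forall mu, mu != 0 -> f mu * E = mu ^+ 2 *: (E * f mu),
      forall mu, mu != 0 -> f mu * F = mu^-1 ^+ 2 *: (F * f mu)
    & forall mu, mu != 0 -> f mu * G = G * f mu] &
   [/\ G * E = E * (G + 2%:R%:A),
      G * F = F * (G - 2%:R%:A)
    & E * F - F * E = (q - q^-1)^-1 *: (f q - f q^-1)]].

Definition Fdiv (k : nat) : A := (qfact q k)^-1 *: (F ^+ k * Kinv ^+ k).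
Definition Ediv (k : nat) : A := (qfact q k)^-1 *: (Kinv ^+ k * E ^+ k).
Definition Gdiv (k : nat) : A := (k`!%:R : C)^-1 *: G ^+ k.

Definition mono (b : nat * C * nat * nat) : A :=
  let: (i, mu, j, k) := b in Fdiv i * f mu * Ediv j * Gdiv k.

Definition PBW_basis : Prop :=
  (forall (bs : seq (nat * C * nat * nat)) (c : nat * C * nat * nat -> C),
      uniq bs -> (forall b, b \in bs -> b.1.1.2 != 0) ->
      \sum_(b <- bs) c b *: mono b = 0 -> forall b, b \in bs -> c b = 0)
  /\ (forall a : A, exists (bs : seq (nat * C * nat * nat))
        (c : nat * C * nat * nat -> C),
        (forall b, b \in bs -> b.1.1.2 != 0) /\ a = \sum_(b <- bs) c b *: mono b).

Definition homog (mu : C) (a : A) : Prop :=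
  exists (ts : seq (nat * nat * nat)) (c : nat * nat * nat -> C),
    a = \sum_(t <- ts) c t *: mono (t.1.1, mu, t.1.2, t.2).
End Generators.

(* T together with tens : A -> A -> T is the tensor square A (x) A:
   tens is bilinear, multiplicative, and the pure tensors of basis
   monomials form a basis of T. *)
Definition tensor_square (A T : algType C) (mono : nat * C * nat * nat -> A)
  (tens : A -> A -> T) : Prop :=
  [/\ forall (a : C) x y z, tens (a *: x + y) z = a *: tens x z + tens y z,
      forall (a : C) x y z, tens x (a *: y + z) = a *: tens x y + tens x z,
      forall x y x' y', tens x y * tens x' y' = tens (x * x') (y * y'),
      (forall (bs : seq ((nat * C * nat * nat) * (nat * C * nat * nat)))
         (c : (nat * C * nat * nat) * (nat * C * nat * nat) -> C),
         uniq bs -> (forall b, b \in bs -> (b.1.1.1.2 != 0) && (b.2.1.1.2 != 0)) ->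
         \sum_(b <- bs) c b *: tens (mono b.1) (mono b.2) = 0 ->
         forall b, b \in bs -> c b = 0)
    & forall t : T, exists xs : seq (A * A),
        t = \sum_(p <- xs) tens p.1 p.2].

Definition coproduct (A T : algType C) (s : C) (E F G : A) (f : C -> A)
  (tens : A -> A -> T) (Delta : A -> T) : Prop :=
  [/\ forall (a : C) x y, Delta (a *: x + y) = a *: Delta x + Delta y,
      forall x y, Delta (x * y) = Delta x * Delta y,
      Delta 1 = 1 &
   [/\ Delta E = tens E (Kel s f) + tens (Kinv s f) E,
      Delta F = tens F (Kel s f) + tens (Kinv s f) F,
      Delta G = tens 1 G + tens G 1
    & forall mu, mu != 0 -> Delta (f mu) = tens (f mu) (f mu)]].

Definition subspace (A : algType C) (X : A -> Prop) : Prop :=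
  X 0 /\ forall (a : C) x y, X x -> X y -> X (a *: x + y).

Definition right_coideal (A T : algType C) (tens : A -> A -> T)
  (Delta : A -> T) (X : A -> Prop) : Prop :=
  subspace X /\
  forall x, X x -> exists xs : seq (A * A),
    (forall p, p \in xs -> X p.1) /\ Delta x = \sum_(p <- xs) tens p.1 p.2.

(* Main.v *)
Require Import Defs.
From HB Require Import structures.
From mathcomp Require Import all_boot all_order all_algebra.
From Stdlib Require Import ClassicalEpsilon.
From mathcomp Require Import ring zify.
Set Implicit Arguments. Unset Strict Implicit. Unset Printing Implicit Defensive.
Import GRing.Theory.
Local Open Scope ring_scope.

Lemma group_sum (V : nmodType) (K : eqType) (J : eqType) (l : seq J)
  (h : J -> K) (g : J -> V) :
  \sum_(p <- l) g p = \sum_(k <- undup (map h l)) \sum_(p <- l | h p == k) g p.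
Proof.
under [RHS]eq_bigr => k _ do rewrite big_mkcond /=.
rewrite exchange_big /=; apply: eq_big_seq => p pl.
rewrite (bigD1_seq (h p)) ?undup_uniq ?mem_undup ?map_f //= eqxx big1 ?addr0 //.
by move=> k; rewrite eq_sym => /negbTE ->.
Qed.

Lemma indep_gen (V : lmodType C) (K : eqType) (m : K -> V) (ok : pred K) :
  (forall (bs : seq K) (c : K -> C), uniq bs -> (forall b, b \in bs -> ok b) ->
     \sum_(b <- bs) c b *: m b = 0 -> forall b, b \in bs -> c b = 0) ->
  forall l : seq (C * K), (forall p, p \in l -> ok p.2) ->
  \sum_(p <- l) p.1 *: m p.2 = 0 -> forall b, \sum_(p <- l | p.2 == b) p.1 = 0.
Proof.
move=> hind l okl hl b.
rewrite (group_sum l snd) in hl.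
have e : \sum_(k <- undup (map snd l)) (\sum_(p <- l | p.2 == k) p.1) *: m k = 0.
  rewrite -[RHS]hl; apply: eq_bigr => k _; rewrite scaler_suml.
  by apply: eq_bigr => p /eqP ->.
case: (boolP (b \in undup (map snd l))) => hb.
  apply: (hind _ (fun k => \sum_(p <- l | p.2 == k) p.1) _ _ e) => //.
    exact: undup_uniq.
  by move=> k; rewrite mem_undup => /mapP [p pl ->]; apply: okl.
rewrite big_seq_cond big1 // => p /andP [pl /eqP pb].
by move: hb; rewrite mem_undup -pb map_f.
Qed.

Section Main.
Variables (q s : C) (A : algType C) (E F G : A) (f : C -> A).
Variables (T : algType C) (tens : A -> A -> T) (Delta : A -> T).
Hypothesis hbasis : PBW_basis q s E F G f.
Hypothesis htens : tensor_square (mono q s E F G f) tens.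

Local Notation I := (nat * C * nat * nat)%type.
Local Notation mono := (mono q s E F G f).

Definition lc (l : seq (C * I)) : A := \sum_(p <- l) p.1 *: mono p.2.
Definition cf (b : I) (l : seq (C * I)) : C := \sum_(p <- l | p.2 == b) p.1.
Definition okl (l : seq (C * I)) := forall p, p \in l -> p.2.1.1.2 != 0.

Lemma lc_cat l1 l2 : lc (l1 ++ l2) = lc l1 + lc l2.
Proof. by rewrite /lc big_cat. Qed.
Lemma cf_cat b l1 l2 : cf b (l1 ++ l2) = cf b l1 + cf b l2.
Proof. by rewrite /cf big_cat. Qed.
Definition scl (k : C) (p : C * I) := (k * p.1, p.2).
Lemma lc_scl k l : lc (map (scl k) l) = k *: lc l.
Proof. by rewrite /lc big_map scaler_sumr; apply: eq_bigr => p _; rewrite scalerA. Qed.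
Lemma cf_scl b k l : cf b (map (scl k) l) = k * cf b l.
Proof. by rewrite /cf big_map mulr_sumr. Qed.
Lemma okl_cat l1 l2 : okl l1 -> okl l2 -> okl (l1 ++ l2).
Proof. by move=> h1 h2 p; rewrite mem_cat => /orP [/h1|/h2]. Qed.
Lemma okl_scl k l : okl l -> okl (map (scl k) l).
Proof. by move=> h p /mapP [p' /h hp ->]. Qed.

Lemma indep l : okl l -> lc l = 0 -> forall b, cf b l = 0.
Proof.
move=> hl h0 b; apply: (indep_gen (m := mono) (ok := fun b : I => b.1.1.2 != 0)) => //.
exact: hbasis.1.
Qed.

Lemma rep_ex (a : A) : exists l, okl l /\ a = lc l.
Proof.
have [bs [c [hbs ->]]] := hbasis.2 a.
exists (map (fun b => (c b, b)) bs); split.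
  by move=> p /mapP [b hb ->]; apply: hbs.
by rewrite /lc big_map.
Qed.

Definition rep (a : A) : seq (C * I) := proj1_sig (constructive_indefinite_description _ (rep_ex a)).
Lemma repP a : okl (rep a) /\ a = lc (rep a).
Proof. exact: (proj2_sig (constructive_indefinite_description _ (rep_ex a))). Qed.

Definition coord (b : I) (a : A) : C := cf b (rep a).

Lemma coord_lc b l : okl l -> coord b (lc l) = cf b l.
Proof.
move=> hl; have [hr er] := repP (lc l).
have h := indep (l := rep (lc l) ++ map (scl (-1)) l) _ _ b.
move: h; rewrite cf_cat cf_scl mulN1r => h.
apply/eqP; rewrite -subr_eq0; apply/eqP; apply: h.
  by apply: okl_cat => //; apply: okl_scl.
by rewrite lc_cat lc_scl -er scaleN1r subrr.
Qed.

Lemma lc_group l : lc l = \sum_(b <- undup (map snd l)) cf b l *: mono b.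
Proof.
rewrite /lc (group_sum l snd); apply: eq_bigr => k _; rewrite /cf scaler_suml.
by apply: eq_bigr => p /eqP ->.
Qed.

Lemma coord_eq0 z : (forall b, coord b z = 0) -> z = 0.
Proof.
move=> h; have [hr ->] := repP z; rewrite lc_group big1 // => b _.
by have := h b; rewrite /coord => ->; rewrite scale0r.
Qed.

Lemma coordDZ b (k : C) x y : coord b (k *: x + y) = k * coord b x + coord b y.
Proof.
have [hx ex] := repP x; have [hy ey] := repP y.
have -> : k *: x + y = lc (map (scl k) (rep x) ++ rep y) by rewrite lc_cat lc_scl -ex -ey.
by rewrite coord_lc ?cf_cat ?cf_scl //; apply: okl_cat => //; apply: okl_scl.
Qed.

Lemma coord0 b : coord b 0 = 0.
Proof. by have := coord_lc b (l := [::]); rewrite /lc big_nil /cf big_nil; apply. Qed.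

Lemma coordD b x y : coord b (x + y) = coord b x + coord b y.
Proof. by have := coordDZ b 1 x y; rewrite scale1r mul1r. Qed.
Lemma coordZ b k x : coord b (k *: x) = k * coord b x.
Proof. by rewrite -(addr0 (k *: x)) coordDZ coord0 addr0. Qed.
Lemma coord_sum (J : Type) b (xs : seq J) (g : J -> A) :
  coord b (\sum_(p <- xs) g p) = \sum_(p <- xs) coord b (g p).
Proof.
elim: xs => [|p xs ih]; first by rewrite !big_nil coord0.
by rewrite !big_cons coordD ih.
Qed.

Lemma coord_mono b b0 : b0.1.1.2 != 0 -> coord b (mono b0) = (b0 == b)%:R.
Proof.
move=> h0; have -> : mono b0 = lc [:: (1, b0)] by rewrite /lc big_seq1 scale1r.
rewrite coord_lc; last by move=> p; rewrite inE => /eqP ->.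
by rewrite /cf big_cons big_nil /=; case: (b0 == b); rewrite ?addr0.
Qed.

Lemma mono_neq0 b0 : b0.1.1.2 != 0 -> mono b0 != 0.
Proof.
move=> h0; apply/eqP => e.
have h := hbasis.1 [:: b0] (fun _ => 1) (erefl _).
have : (1 : C) = 0.
  apply: (h _ _ b0); last by rewrite inE.
    by move=> b; rewrite inE => /eqP ->.
  by rewrite big_seq1 scale1r e.
by move/eqP; rewrite oner_eq0.
Qed.

Lemma tensDZl k x y z : tens (k *: x + y) z = k *: tens x z + tens y z.
Proof. by case: htens => h _ _ _ _; apply: h. Qed.
Lemma tensDZr k x y z : tens x (k *: y + z) = k *: tens x y + tens x z.
Proof. by case: htens => _ h _ _ _; apply: h. Qed.
Lemma tensM x y x' y' : tens x y * tens x' y' = tens (x * x') (y * y').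
Proof. by case: htens => _ _ h _ _; apply: h. Qed.
Lemma tens0l z : tens 0 z = 0.
Proof.
have h := tensDZl 1 0 0 z; rewrite scaler0 addr0 scale1r in h.
by apply: (addrI (tens 0 z)); rewrite addr0 -h.
Qed.
Lemma tens0r z : tens z 0 = 0.
Proof.
have h := tensDZr 1 z 0 0; rewrite scaler0 addr0 scale1r in h.
by apply: (addrI (tens z 0)); rewrite addr0 -h.
Qed.
Lemma tensZl k x z : tens (k *: x) z = k *: tens x z.
Proof. by have := tensDZl k x 0 z; rewrite addr0 tens0l addr0. Qed.
Lemma tensZr k x z : tens z (k *: x) = k *: tens z x.
Proof. by have := tensDZr k z x 0; rewrite addr0 tens0r addr0. Qed.
Lemma tensDl x y z : tens (x + y) z = tens x z + tens y z.
Proof. by have := tensDZl 1 x y z; rewrite !scale1r. Qed.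
Lemma tensDr x y z : tens z (x + y) = tens z x + tens z y.
Proof. by have := tensDZr 1 z x y; rewrite !scale1r. Qed.
Lemma tens_suml (J : Type) (r : seq J) (g : J -> A) z :
  tens (\sum_(i <- r) g i) z = \sum_(i <- r) tens (g i) z.
Proof. elim: r => [|i r ih]; by rewrite ?big_nil ?tens0l // !big_cons tensDl ih. Qed.
Lemma tens_sumr (J : Type) (r : seq J) (g : J -> A) z :
  tens z (\sum_(i <- r) g i) = \sum_(i <- r) tens z (g i).
Proof. elim: r => [|i r ih]; by rewrite ?big_nil ?tens0r // !big_cons tensDr ih. Qed.

Lemma tens_lc l1 l2 : tens (lc l1) (lc l2) =
  \sum_(u <- l1) \sum_(v <- l2) (u.1 * v.1) *: tens (mono u.2) (mono v.2).
Proof.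
rewrite /lc tens_suml; apply: eq_bigr => u _.
rewrite tensZl tens_sumr scaler_sumr; apply: eq_bigr => v _.
by rewrite tensZr scalerA.
Qed.

Lemma cf_cons b p l : cf b (p :: l) = (if p.2 == b then p.1 else 0) + cf b l.
Proof. by rewrite /cf big_cons; case: ifP; rewrite ?add0r. Qed.
Lemma cf_nil b : cf b [::] = 0.
Proof. by rewrite /cf big_nil. Qed.

Lemma cf_mul b b' l1 l2 : cf b l1 * cf b' l2 =
  \sum_(u <- l1) \sum_(v <- l2) (if (u.2, v.2) == (b, b') then u.1 * v.1 else 0).
Proof.
elim: l1 => [|u l1 ih]; first by rewrite cf_nil mul0r big_nil.
rewrite cf_cons mulrDl ih big_cons; congr (_ + _); clear ih.
elim: l2 => [|v l2 ih2]; first by rewrite cf_nil mulr0 big_nil.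
rewrite cf_cons mulrDr ih2 big_cons; congr (_ + _).
rewrite xpair_eqE; case: (u.2 == b); case: (v.2 == b'); by rewrite ?mulr0 ?mul0r.
Qed.

Lemma WD (xs : seq (A * A)) : \sum_(p <- xs) tens p.1 p.2 = 0 ->
  forall b b', \sum_(p <- xs) coord b p.1 * coord b' p.2 = 0.
Proof.
move=> h0 b b'.
pose L := flatten [seq [seq (u.1 * v.1, (u.2, v.2)) | u <- rep p.1, v <- rep p.2] | p <- xs].
have h1 : \sum_(r <- L) r.1 *: tens (mono r.2.1) (mono r.2.2) = 0.
  rewrite -[RHS]h0 /L big_flatten big_map; apply: eq_bigr => p _.
  rewrite big_allpairs_dep /=.
  by rewrite -tens_lc -(proj2 (repP p.1)) -(proj2 (repP p.2)).
have okL : forall r, r \in L -> (r.2.1.1.1.2 != 0) && (r.2.2.1.1.2 != 0).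
  move=> r /flattenP [rr /mapP [p _ ->]] /allpairsPdep [u [v [hu hv ->]]] /=.
  by have [hp1 _] := repP p.1; have [hp2 _] := repP p.2; rewrite hp1 // hp2.
have hti : forall (bs : seq (I * I)) (c : I * I -> C), uniq bs ->
   (forall b, b \in bs -> (b.1.1.1.2 != 0) && (b.2.1.1.2 != 0)) ->
   \sum_(b <- bs) c b *: tens (mono b.1) (mono b.2) = 0 -> forall b, b \in bs -> c b = 0.
  by case: htens => _ _ _ h _; apply: h.
have h2 := indep_gen (m := fun bb : I * I => tens (mono bb.1) (mono bb.2))
  (ok := fun bb : I * I => (bb.1.1.1.2 != 0) && (bb.2.1.1.2 != 0)) hti okL h1 (b, b').
move: h2; rewrite big_mkcond /L big_flatten big_map => h2; rewrite -[RHS]h2.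
apply: eq_bigr => p _; rewrite big_allpairs_dep /coord; apply: cf_mul.
Qed.

Hypothesis hrel : U_relations q E F G f.
Hypothesis hDelta : coproduct s E F G f tens Delta.
Hypothesis hs : s ^+ 2 = q.
Hypothesis hq : transcendental q.

Lemma q_neq0 : q != 0.
Proof.
have := hq (p := 'X); rewrite polyX_eq0 map_polyX rootX => /(_ isT).
by [].
Qed.

Lemma s_neq0 : s != 0.
Proof. by apply: contraNneq q_neq0 => e; rewrite -hs e expr0n. Qed.

Lemma fM mu nu : mu != 0 -> nu != 0 -> f mu * f nu = f (mu * nu).
Proof. by case: hrel => h _ _ _; apply: h. Qed.
Lemma f1 : f 1 = 1.
Proof. by case: hrel. Qed.
Lemma fE mu : mu != 0 -> f mu * E = mu ^+ 2 *: (E * f mu).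
Proof. by case: hrel => _ _ [h _ _] _; apply: h. Qed.
Lemma fF mu : mu != 0 -> f mu * F = mu^-1 ^+ 2 *: (F * f mu).
Proof. by case: hrel => _ _ [_ h _] _; apply: h. Qed.

Lemma DeltaDZ k x y : Delta (k *: x + y) = k *: Delta x + Delta y.
Proof. by case: hDelta => h _ _ _; apply: h. Qed.
Lemma DeltaM x y : Delta (x * y) = Delta x * Delta y.
Proof. by case: hDelta => _ h _ _; apply: h. Qed.
Lemma Delta1 : Delta 1 = 1.
Proof. by case: hDelta. Qed.
Lemma DeltaE : Delta E = tens E (f s) + tens (f s^-1) E.
Proof. by case: hDelta => _ _ _ [h _ _ _]. Qed.
Lemma DeltaF : Delta F = tens F (f s) + tens (f s^-1) F.
Proof. by case: hDelta => _ _ _ [_ h _ _]. Qed.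
Lemma DeltaG : Delta G = tens 1 G + tens G 1.
Proof. by case: hDelta => _ _ _ [_ _ h _]. Qed.
Lemma Deltaf mu : mu != 0 -> Delta (f mu) = tens (f mu) (f mu).
Proof. by case: hDelta => _ _ _ [_ _ _ h]; apply: h. Qed.

Lemma Delta0 : Delta 0 = 0.
Proof.
have h := DeltaDZ 1 0 0; rewrite scaler0 addr0 scale1r in h.
by apply: (addrI (Delta 0)); rewrite addr0 -h.
Qed.
Lemma DeltaZ k x : Delta (k *: x) = k *: Delta x.
Proof. by have := DeltaDZ k x 0; rewrite addr0 Delta0 addr0. Qed.
Lemma DeltaD x y : Delta (x + y) = Delta x + Delta y.
Proof. by have := DeltaDZ 1 x y; rewrite !scale1r. Qed.

Lemma tens11 : tens 1 1 = 1.
Proof. by rewrite -f1 -Deltaf ?oner_eq0 // f1 Delta1. Qed.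

Lemma fX l n : l != 0 -> f l ^+ n = f (l ^+ n).
Proof.
move=> hl; elim: n => [|n ih]; first by rewrite !expr0 f1.
by rewrite exprS ih fM ?expf_neq0 // -exprS.
Qed.

Lemma EXf b mu : mu != 0 -> E ^+ b * f mu = (mu^-1 ^+ 2) ^+ b *: (f mu * E ^+ b).
Proof.
move=> hmu.
have Ef : E * f mu = mu^-1 ^+ 2 *: (f mu * E).
  rewrite fE // scalerA -exprMn mulVf // expr1n scale1r //.
elim: b => [|b ih]; first by rewrite !expr0 mul1r mulr1 scale1r.
rewrite exprSr -mulrA Ef -scalerAr (mulrA (E ^+ b)) ih -scalerAl scalerA.
by rewrite -[f mu * E ^+ b * E]mulrA -(exprSr E) -exprS.
Qed.

Inductive span (S : A -> Prop) : T -> Prop :=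
  | span0 : span S 0
  | spanC y v t : S v -> span S t -> span S (tens y v + t).

Lemma span_add S t1 t2 : span S t1 -> span S t2 -> span S (t1 + t2).
Proof.
move=> h1 h2; elim: h1 => [|y v t0 hv _ ih]; first by rewrite add0r.
by rewrite -addrA; apply: spanC.
Qed.
Lemma span_scale S k t : span S t -> span S (k *: t).
Proof.
elim=> [|y v t0 hv _ ih]; first by rewrite scaler0; apply: span0.
by rewrite scalerDr -tensZl; apply: spanC.
Qed.
Lemma span_tens S y v : S v -> span S (tens y v).
Proof. by move=> hv; rewrite -[tens y v]addr0; apply: spanC => //; apply: span0. Qed.
Lemma span_weak (S S' : A -> Prop) t : (forall v, S v -> S' v) -> span S t -> span S' t.
Proof.
move=> hS; elim=> [|y v t' hv _ ih]; first exact: span0.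
by apply: spanC => //; apply: hS.
Qed.
Lemma span_mul (S1 S2 S : A -> Prop) t1 t2 :
  (forall v w, S1 v -> S2 w -> S (v * w)) -> span S1 t1 -> span S2 t2 -> span S (t1 * t2).
Proof.
move=> hS h1 h2; elim: h1 => [|y v t0 hv _ ih]; first by rewrite mul0r; apply: span0.
rewrite mulrDl; apply: span_add => //.
elim: h2 {ih} => [|y' w t' hw _ ih']; first by rewrite mulr0; apply: span0.
by rewrite mulrDr tensM; apply: spanC => //; apply: hS.
Qed.
Lemma span_list S t : span S t ->
  exists zs : seq (A * A), (forall p, p \in zs -> S p.2) /\ t = \sum_(p <- zs) tens p.1 p.2.
Proof.
elim=> [|y v t' hv _ [zs [hz ->]]]; first by exists [::]; rewrite big_nil.
exists ((y, v) :: zs); rewrite big_cons; split => // p; rewrite inE => /orP [/eqP -> //|].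
exact: hz.
Qed.

Definition FLp (v : A) := exists a l d, (0 < a)%N /\ l != 0 /\ v = d *: (F ^+ a * f l).
Definition ELp (v : A) := exists b l d, (0 < b)%N /\ l != 0 /\ v = d *: (f l * E ^+ b).
Definition GLp (v : A) := exists c d, (0 < c)%N /\ v = d *: G ^+ c.
Definition Mf (n : nat) (cz az : bool) (v : A) :=
  exists a l b c d, [/\ l != 0, (n <= a + b + c)%N, (cz -> c = 0%N), (az -> a = 0%N)
     & v = d *: (F ^+ a * f l * E ^+ b * G ^+ c)].

Lemma FLp_F v : FLp v -> FLp (v * F).
Proof.
move=> [a [l [d [ha [hl ->]]]]]; exists a.+1, l, (d * l^-1 ^+ 2); split => //; split => //.
by rewrite -scalerAl -mulrA fF // -scalerAr scalerA (mulrA (F ^+ a)) -exprSr.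
Qed.
Lemma FLp_f v mu : mu != 0 -> FLp v -> FLp (v * f mu).
Proof.
move=> hmu [a [l [d [ha [hl ->]]]]]; exists a, (l * mu), d; split => //; split.
  by rewrite mulf_neq0.
by rewrite -scalerAl -mulrA fM.
Qed.
Lemma ELp_E v : ELp v -> ELp (v * E).
Proof.
move=> [b [l [d [hb [hl ->]]]]]; exists b.+1, l, d; split => //; split => //.
by rewrite -scalerAl -mulrA -exprSr.
Qed.
Lemma ELp_f v mu : mu != 0 -> ELp v -> ELp (v * f mu).
Proof.
move=> hmu [b [l [d [hb [hl ->]]]]]; exists b, (l * mu), (d * (mu^-1 ^+ 2) ^+ b).
split => //; split; first by rewrite mulf_neq0.
by rewrite -scalerAl -mulrA EXf // -scalerAr scalerA mulrA fM.
Qed.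
Lemma ELp_fl v mu : mu != 0 -> ELp v -> ELp (f mu * v).
Proof.
move=> hmu [b [l [d [hb [hl ->]]]]]; exists b, (mu * l), d.
split => //; split; first by rewrite mulf_neq0.
by rewrite -scalerAr mulrA fM.
Qed.
Lemma GLp_G v : GLp v -> GLp (v * G).
Proof.
move=> [c [d [hc ->]]]; exists c.+1, d; split => //.
by rewrite -scalerAl -exprSr.
Qed.

Lemma Mf_weak n m cz az v : (m <= n)%N -> Mf n cz az v -> Mf m cz az v.
Proof.
move=> hmn [a [l [b [c [d [hl hn hc ha ->]]]]]]; exists a, l, b, c, d; split => //.
exact: leq_trans hmn hn.
Qed.
Lemma Mf_f mu cz az : mu != 0 -> Mf 0 cz az (f mu).
Proof.
move=> hmu; exists 0%N, mu, 0%N, 0%N, 1; split => //.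
by rewrite !expr0 mul1r !mulr1 scale1r.
Qed.
Lemma Mf_1 cz az : Mf 0 cz az 1.
Proof. by rewrite -f1; apply: Mf_f; rewrite oner_eq0. Qed.
Lemma FLp_Mf v : FLp v -> Mf 1 true false v.
Proof.
move=> [a [l [d [ha [hl ->]]]]]; exists a, l, 0%N, 0%N, d; split => //.
  by rewrite !addn0.
by rewrite !expr0 !mulr1.
Qed.
Lemma ELp_Mf v : ELp v -> Mf 1 true true v.
Proof.
move=> [b [l [d [hb [hl ->]]]]]; exists 0%N, l, b, 0%N, d; split; rewrite ?addn0 ?add0n //.
by rewrite !expr0 !mulr1 mul1r.
Qed.
Lemma GLp_Mf v : GLp v -> Mf 1 false true v.
Proof.
move=> [c [d [hc ->]]]; exists 0%N, 1, 0%N, c, d; split; rewrite ?oner_eq0 ?add0n //.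
by rewrite !expr0 f1 !mul1r.
Qed.

Lemma Mf_mul n m cz az v w : Mf n true az v -> Mf m cz true w -> Mf (n + m) cz az (v * w).
Proof.
move=> [a [l [b [c [d [hl hn hc ha ->]]]]]] [a' [l' [b' [c' [d' [hl' hm hc' ha' ->]]]]]].
rewrite (hc isT) (ha' isT) in hn hm *.
exists a, (l * l'), (b + b')%N, c', (d * d' * (l'^-1 ^+ 2) ^+ b); split => //.
- by rewrite mulf_neq0.
- lia.
rewrite -scalerAl -scalerAr scalerA !expr0 !mulr1 mul1r.
rewrite !mulrA -(mulrA (F ^+ a * f l) (E ^+ b) (f l')) EXf // -scalerAr -!scalerAl scalerA.
congr (_ *: _).
by rewrite (mulrA (F ^+ a * f l)) -(mulrA (F ^+ a) (f l)) fM // -(mulrA _ (E ^+ b)) -exprD.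
Qed.

Lemma sX_neq0 i : s ^+ i != 0.
Proof. exact: expf_neq0 s_neq0. Qed.
Lemma sVX_neq0 i : s^-1 ^+ i != 0.
Proof. by apply: expf_neq0; rewrite invr_eq0 s_neq0. Qed.
Lemma sV_neq0 : s^-1 != 0.
Proof. by rewrite invr_eq0 s_neq0. Qed.

Lemma sXsVX i : s ^+ i * s^-1 ^+ i = 1.
Proof. by rewrite -exprMn mulfV ?s_neq0 // expr1n. Qed.

Lemma DFi i : exists t, span FLp t /\ Delta (F ^+ i) = tens (F ^+ i) (f (s ^+ i)) + t.
Proof.
elim: i => [|i [t [ht e]]].
  by exists 0; split; [apply: span0 | rewrite !expr0 f1 Delta1 tens11 addr0].
exists (tens (F ^+ i * f s^-1) (f (s ^+ i) * F) + t * (tens F (f s) + tens (f s^-1) F)); split.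
  apply: span_add.
    apply: span_tens; exists 1%N, (s ^+ i), ((s ^+ i)^-1 ^+ 2); split => //; split.
      exact: sX_neq0.
    by rewrite expr1 fF // sX_neq0.
  apply: (span_mul (S2 := fun w => w = f s \/ w = F)) ht _.
    by move=> v w hv [->|->]; [apply: FLp_f; rewrite ?s_neq0 | apply: FLp_F].
  by apply: span_add; apply: span_tens; [left|right].
rewrite exprSr DeltaM e DeltaF mulrDl mulrDr !tensM (fM (sX_neq0 i) s_neq0) -!exprSr.
by rewrite addrA.
Qed.

Lemma DFd i : exists t, span FLp t /\ Delta (Fdiv q s F f i) = tens (Fdiv q s F f i) 1 + t.
Proof.
have [t [ht e]] := DFi i.
exists ((qfact q i)^-1 *: (t * tens (f (s^-1 ^+ i)) (f (s^-1 ^+ i)))); split.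
  apply: span_scale; apply: (span_mul (S2 := fun w => w = f (s^-1 ^+ i))) ht _.
    by move=> v w hv ->; apply: FLp_f; rewrite ?sVX_neq0.
  exact: span_tens.
rewrite /Fdiv /Kinv DeltaZ DeltaM fX ?sV_neq0 // e Deltaf ?sVX_neq0 // mulrDl tensM.
by rewrite fM ?sX_neq0 ?sVX_neq0 // sXsVX f1 scalerDr tensZl.
Qed.

Lemma DEi j : exists t, span ELp t /\ Delta (E ^+ j) = tens (E ^+ j) (f (s ^+ j)) + t.
Proof.
elim: j => [|j [t [ht e]]].
  by exists 0; split; [apply: span0 | rewrite !expr0 f1 Delta1 tens11 addr0].
exists (tens (E ^+ j * f s^-1) (f (s ^+ j) * E) + t * (tens E (f s) + tens (f s^-1) E)); split.
  apply: span_add.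
    apply: span_tens; exists 1%N, (s ^+ j), 1; split => //; split.
      exact: sX_neq0.
    by rewrite expr1 scale1r.
  apply: (span_mul (S2 := fun w => w = f s \/ w = E)) ht _.
    by move=> v w hv [->|->]; [apply: ELp_f; rewrite ?s_neq0 | apply: ELp_E].
  by apply: span_add; apply: span_tens; [left|right].
rewrite exprSr DeltaM e DeltaE mulrDl mulrDr !tensM (fM (sX_neq0 j) s_neq0) -!exprSr.
by rewrite addrA.
Qed.

Lemma DEd j : exists t, span ELp t /\ Delta (Ediv q s E f j) = tens (Ediv q s E f j) 1 + t.
Proof.
have [t [ht e]] := DEi j.
exists ((qfact q j)^-1 *: (tens (f (s^-1 ^+ j)) (f (s^-1 ^+ j)) * t)); split.
  apply: span_scale; apply: (span_mul (S1 := fun w => w = f (s^-1 ^+ j))) _ ht.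
    by move=> v w -> hw; apply: ELp_fl; rewrite ?sVX_neq0.
  exact: span_tens.
rewrite /Ediv /Kinv DeltaZ DeltaM fX ?sV_neq0 // e Deltaf ?sVX_neq0 // mulrDr tensM.
by rewrite fM ?sX_neq0 ?sVX_neq0 // mulrC sXsVX f1 scalerDr tensZl.
Qed.

Lemma DGi k : exists t, span GLp t /\ Delta (G ^+ k) = tens (G ^+ k) 1 + t.
Proof.
elim: k => [|k [t [ht e]]].
  by exists 0; split; [apply: span0 | rewrite !expr0 Delta1 tens11 addr0].
exists (tens (G ^+ k) G + t * (tens 1 G + tens G 1)); split.
  apply: span_add.
    by apply: span_tens; exists 1%N, 1; rewrite expr1 scale1r.
  apply: (span_mul (S2 := fun w => w = G \/ w = 1)) ht _.
    by move=> v w hv [->|->]; [apply: GLp_G | rewrite mulr1].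
  by apply: span_add; apply: span_tens; [left|right].
rewrite exprSr DeltaM e DeltaG mulrDl mulrDr !tensM !mulr1 mul1r -exprSr.
by rewrite addrA (addrC (tens (G ^+ k) G)).
Qed.

Lemma DGd k : exists t, span GLp t /\ Delta (Gdiv G k) = tens (Gdiv G k) 1 + t.
Proof.
have [t [ht e]] := DGi k.
exists ((k`!%:R)^-1 *: t); split; first exact: span_scale.
by rewrite /Gdiv DeltaZ e scalerDr tensZl.
Qed.

Lemma step x0 v0 y0 w0 X1 Y1 cz az :
  Mf 0 true az v0 -> Mf 0 cz true w0 -> span (Mf 1 true az) X1 -> span (Mf 1 cz true) Y1 ->
  exists Z, span (Mf 1 cz az) Z /\
    (tens x0 v0 + X1) * (tens y0 w0 + Y1) = tens (x0 * y0) (v0 * w0) + Z.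
Proof.
move=> hv hw hX hY.
exists (tens x0 v0 * Y1 + X1 * (tens y0 w0 + Y1)); split.
  apply: span_add.
    apply: (span_mul (S1 := fun v => v = v0) (S2 := Mf 1 cz true)) => //; last exact: span_tens.
    by move=> v w -> hw'; apply: (@Mf_weak (0 + 1)%N) => //; apply: Mf_mul.
  apply: (span_mul (S1 := Mf 1 true az) (S2 := Mf 0 cz true)) => //.
    by move=> v w hv' hw'; apply: (@Mf_weak (1 + 0)%N) => //; apply: Mf_mul.
  apply: span_add; first exact: span_tens.
  by apply: span_weak hY => v; apply: Mf_weak.
by rewrite mulrDl mulrDr tensM addrA.
Qed.

Lemma Dmono i mu j k : mu != 0 -> exists Z, span (Mf 1 false false) Z /\
  Delta (mono (i, mu, j, k)) = tens (mono (i, mu, j, k)) (f mu) + Z.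
Proof.
move=> hmu.
have [tF [hF eF]] := DFd i; have [tE [hE eE]] := DEd j; have [tG [hG eG]] := DGd k.
rewrite /= !DeltaM eF Deltaf // eE eG.
have [Z1 [h1 e1]] := @step (Fdiv q s F f i) 1 (f mu) (f mu) tF 0 true false (Mf_1 true false) (Mf_f true true hmu)
  (span_weak FLp_Mf hF) (span0 _).
rewrite -(addr0 (tens (f mu) (f mu))) e1 mul1r.
have [Z2 [h2 e2]] := @step (Fdiv q s F f i * f mu) (f mu) (Ediv q s E f j) 1 Z1 tE true false (Mf_f true false hmu)
  (Mf_1 true true) h1 (span_weak ELp_Mf hE).
rewrite e2 mulr1.
have [Z3 [h3 e3]] := @step (Fdiv q s F f i * f mu * Ediv q s E f j) (f mu) (Gdiv G k) 1 Z2 tG false false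
  (Mf_f true false hmu) (Mf_1 false true) h2 (span_weak GLp_Mf hG).
by rewrite e3 mulr1; exists Z3.
Qed.

Lemma mono_expand a l b c : l != 0 -> mono (a, l, b, c) =
  ((qfact q a)^-1 * (qfact q b)^-1 * (c`!%:R)^-1) *:
    (F ^+ a * f (s^-1 ^+ a * l * s^-1 ^+ b) * E ^+ b * G ^+ c).
Proof.
move=> hl; rewrite /= /Fdiv /Ediv /Gdiv /Kinv !fX ?sV_neq0 //.
rewrite -!scalerAl -!scalerAr -!scalerAl !scalerA; congr (_ *: _); first by ring.
rewrite -(mulrA (F ^+ a) (f _) (f l)) fM ?sVX_neq0 // mulrA.
by rewrite -(mulrA (F ^+ a) (f _) (f _)) fM ?mulf_neq0 ?sVX_neq0.
Qed.

Lemma P_mono a l b c : l != 0 -> exists g,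
  F ^+ a * f l * E ^+ b * G ^+ c = g *: mono (a, l * s ^+ (a + b), b, c).
Proof.
move=> hl.
have hl' : l * s ^+ (a + b) != 0 by rewrite mulf_neq0 ?sX_neq0.
have e := mono_expand a b c hl'.
have el : s^-1 ^+ a * (l * s ^+ (a + b)) * s^-1 ^+ b = l.
  rewrite exprD !exprVn; field.
  by rewrite !sX_neq0.
rewrite el in e.
set g := _ * _ * _ in e.
have hg : g != 0.
  apply: contraNneq (mono_neq0 (b0 := (a, l * s ^+ (a + b), b, c)) hl') => hg0.
  by rewrite e hg0 scale0r.
exists g^-1; by rewrite e scalerA mulVf // scale1r.
Qed.

Lemma coord_Mf1 cz az v nu : Mf 1 cz az v -> coord (0%N, nu, 0%N, 0%N) v = 0.
Proof.
move=> [a [l [b [c [d [hl hn _ _ ->]]]]]].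
have [g ->] := P_mono a b c hl.
rewrite !coordZ coord_mono ?mulf_neq0 ?sX_neq0 //.
case e: (_ == _); last by rewrite !mulr0.
move/eqP: e => [ha _ hb hc]; move: hn; by rewrite ha hb hc.
Qed.

Lemma f_mono mu : f mu = mono (0%N, mu, 0%N, 0%N).
Proof.
by rewrite /= /Fdiv /Ediv /Gdiv /qfact big_geq // !expr0 invr1 !scale1r !mulr1 mul1r.
Qed.

Lemma coord_f b mu : mu != 0 -> coord b (f mu) = ((0%N, mu, 0%N, 0%N) == b)%:R.
Proof. by move=> hmu; rewrite f_mono coord_mono. Qed.

Definition KeyP (z : A) (ys : seq (A * A)) :=
  Delta z = \sum_(p <- ys) tens p.1 p.2 /\
  forall b nu, nu != 0 ->
    \sum_(p <- ys) coord b p.1 * coord (0%N, nu, 0%N, 0%N) p.2 =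
    if b.1.1.2 == nu then coord b z else 0.

Lemma key_mono b0 : b0.1.1.2 != 0 -> exists ys, KeyP (mono b0) ys.
Proof.
case: b0 => [[[i mu] j] k] /= hmu.
have [Z [hZ eZ]] := Dmono i j k hmu.
have [zs [hzs eZs]] := span_list hZ; rewrite eZs in eZ.
exists ((mono (i, mu, j, k), f mu) :: zs); split; first by rewrite eZ big_cons.
move=> b nu hnu; rewrite big_cons big_seq big1 ?addr0; last first.
  by move=> p hp; rewrite (@coord_Mf1 _ _ _ nu (hzs p hp)) ?mulr0.
rewrite coord_f // coord_mono //.
case: (eqVneq (i, mu, j, k) b) => [<-|hne] /=; last by rewrite mul0r; case: ifP.
by rewrite mul1r !xpair_eqE !eqxx /= andbT eq_sym; case: (nu == mu).
Qed.

Lemma key_lc l : okl l -> exists ys, KeyP (lc l) ys.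
Proof.
elim: l => [|p l ih] hl.
  exists [::]; split; first by rewrite /lc !big_nil Delta0.
  by move=> b nu _; rewrite big_nil /lc big_nil coord0; case: ifP.
have [ys1 [e1 h1]] := key_mono (hl p (mem_head _ _)).
have hl' : okl l by move=> r hr; apply: hl; rewrite inE hr orbT.
have [ys2 [e2 h2]] := ih hl'.
exists (map (fun r => (p.1 *: r.1, r.2)) ys1 ++ ys2); split.
  rewrite /lc big_cons -/(lc l) DeltaDZ e1 e2 big_cat big_map /= scaler_sumr.
  by congr (_ + _); apply: eq_bigr => r _; rewrite tensZl.
move=> b nu hnu; rewrite big_cat big_map /= h2 //.
have -> : \sum_(r <- ys1) coord b (p.1 *: r.1) * coord (0%N, nu, 0%N, 0%N) r.2 =
   p.1 * \sum_(r <- ys1) coord b r.1 * coord (0%N, nu, 0%N, 0%N) r.2.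
  by rewrite mulr_sumr; apply: eq_bigr => r _; rewrite coordZ mulrA.
rewrite h1 // /lc big_cons -/(lc l) coordDZ.
by case: ifP; rewrite ?mulr0 ?addr0.
Qed.

Lemma key z : exists ys, KeyP z ys.
Proof. by have [hr ->] := repP z; apply: key_lc. Qed.

Lemma subspace_sum (X : A -> Prop) (xs : seq (A * A)) (k : A * A -> C) :
  subspace X -> (forall p, p \in xs -> X p.1) -> X (\sum_(p <- xs) k p *: p.1).
Proof.
move=> [h0 hl]; elim: xs => [|p xs ih] hx; first by rewrite big_nil.
rewrite big_cons; apply: hl; first by apply: hx; rewrite mem_head.
by apply: ih => r hr; apply: hx; rewrite inE hr orbT.
Qed.

Definition muof (p : C * I) : C := p.2.1.1.2.

Lemma cf_filter b nu l :
  cf b (filter (fun p => muof p == nu) l) = if b.1.1.2 == nu then cf b l else 0.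
Proof.
rewrite /cf big_filter_cond; case: ifP => h.
  apply: eq_bigl => p; case e: (p.2 == b); rewrite ?andbF ?andbT //.
  by rewrite /muof (eqP e) h.
by rewrite big1 // => p /andP [h1 /eqP e]; move: h1; rewrite /muof e h.
Qed.

Definition trip (p : C * I) : nat * nat * nat := (p.2.1.1.1, p.2.1.2, p.2.2).

Lemma homog_filter l nu : homog q s E F G f nu (lc (filter (fun p => muof p == nu) l)).
Proof.
set L := filter _ l.
exists (undup (map trip L)), (fun t => \sum_(p <- L | trip p == t) p.1).
rewrite /lc (group_sum L trip); apply: eq_bigr => t _; rewrite scaler_suml.
rewrite big_seq_cond [RHS]big_seq_cond; apply: eq_bigr => p /andP [hp /eqP ht].
move: hp; rewrite mem_filter => /andP [hm _].
move: ht hm; rewrite /trip /muof; case: p => [c0 [[[i m] j] k]] /= <- /eqP -> /=.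
by [].
Qed.

Lemma coord_homog nu y b : nu != 0 -> homog q s E F G f nu y -> b.1.1.2 != nu -> coord b y = 0.
Proof.
move=> hnu [ts [c ->]] hb; rewrite coord_sum big1 // => t _.
rewrite coordZ coord_mono //; case: b hb => [[[i m] j] k] /= hb.
by rewrite !xpair_eqE (eq_sym nu) (negbTE hb) /= !andbF mulr0.
Qed.

Lemma coordB b x y : coord b (x - y) = coord b x - coord b y.
Proof. by rewrite -scaleN1r coordD coordZ mulN1r. Qed.

Lemma okl_filter (P : pred (C * I)) l : okl l -> okl (filter P l).
Proof. by move=> h p; rewrite mem_filter => /andP [_ /h]. Qed.

Lemma part1 (X : A -> Prop) : right_coideal tens Delta X -> forall x, X x ->
  exists (mus : seq C) (xs : C -> A),
    [/\ uniq mus,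
        forall mu, mu \in mus -> [/\ mu != 0, X (xs mu) & homog q s E F G f mu (xs mu)]
      & x = \sum_(mu <- mus) xs mu].
Proof.
move=> [hsub hco] x hx.
have [hr ex] := repP x.
exists (undup (map muof (rep x))), (fun nu => lc (filter (fun p => muof p == nu) (rep x))).
split.
- exact: undup_uniq.
- move=> nu; rewrite mem_undup => /mapP [p hp ->].
  have hnu : muof p != 0 := hr p hp.
  split => //; last exact: homog_filter.
  have [xs [hxs exs]] := hco x hx.
  have [ys [eys hys]] := key x.
  suff -> : lc (filter (fun p0 => muof p0 == muof p) (rep x)) =
      \sum_(r <- xs) coord (0%N, muof p, 0%N, 0%N) r.2 *: r.1.
    exact: subspace_sum.
  apply/eqP; rewrite -subr_eq0; apply/eqP; apply: coord_eq0 => b.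
  rewrite coordB coord_lc; last exact: okl_filter.
  have -> : cf b [seq p0 <- rep x | muof p0 == muof p] =
    (if b.1.1.2 == muof p then cf b (rep x) else 0) by exact: cf_filter.
  rewrite coord_sum.
  have e0 : \sum_(r <- xs ++ map (fun r => (- r.1, r.2)) ys) tens r.1 r.2 = 0.
    rewrite big_cat big_map /= -exs.
    under eq_bigr => r _ do rewrite -scaleN1r tensZl.
    by rewrite -scaler_sumr -eys scaleN1r subrr.
  have := WD e0 b (0%N, muof p, 0%N, 0%N); rewrite big_cat big_map /=.
  have -> : \sum_(r <- ys) coord b (- r.1) * coord (0%N, muof p, 0%N, 0%N) r.2 =
     - \sum_(r <- ys) coord b r.1 * coord (0%N, muof p, 0%N, 0%N) r.2.
    by rewrite -sumrN; apply: eq_bigr => r _; rewrite -scaleN1r coordZ mulN1r mulNr.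
  rewrite hys // => e1p.
  have -> : cf b (rep x) = coord b x by rewrite {2}ex coord_lc.
  have -> : \sum_(r <- xs) coord b (coord (0%N, muof p, 0%N, 0%N) r.2 *: r.1) =
      \sum_(r <- xs) coord b r.1 * coord (0%N, muof p, 0%N, 0%N) r.2.
    by apply: eq_bigr => r _; rewrite coordZ mulrC.
  rewrite -opprB; first [ (rewrite e1p oppr0 //) | (have h := etrans (congr1 (fun z => - z) e1p) (oppr0 _); exact h) | (apply: (canRL (@opprK _)); rewrite oppr0; exact e1p) ].
- rewrite {1}ex /lc (group_sum (rep x) muof); apply: eq_bigr => nu _.
  by rewrite big_filter.
Qed.

Lemma part2 (mus : seq C) (ys : C -> A) : uniq mus ->
  (forall mu, mu \in mus -> mu != 0 /\ homog q s E F G f mu (ys mu)) ->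
  \sum_(mu <- mus) ys mu = 0 -> forall mu, mu \in mus -> ys mu = 0.
Proof.
move=> hu hh hsum mu hmu; apply: coord_eq0 => b.
have [hmu0 hhom] := hh mu hmu.
case: (eqVneq b.1.1.2 mu) => hb; last exact: coord_homog hmu0 hhom hb.
have e : \sum_(i <- mus | i != mu) coord b (ys i) = 0.
  rewrite big_seq_cond big1 // => nu /andP [hnu hne].
  have [h0 hh'] := hh nu hnu; apply: coord_homog h0 hh' _.
  by rewrite hb eq_sym.
have := congr1 (coord b) hsum; rewrite coord0 coord_sum (bigD1_seq mu) //= e addr0.
by [].
Qed.

End Main.

Theorem corollary4p2
  (q s : C) (hq : transcendental q) (hs : s ^+ 2 = q)
  (A : algType C) (E F G : A) (f : C -> A)
  (hrel : U_relations q E F G f)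
  (hbasis : PBW_basis q s E F G f)
  (T : algType C) (tens : A -> A -> T)
  (htens : tensor_square (mono q s E F G f) tens)
  (Delta : A -> T) (hDelta : coproduct s E F G f tens Delta)
  (X : A -> Prop) (hX : right_coideal tens Delta X) :
  (forall x, X x ->
     exists (mus : seq C) (xs : C -> A),
       [/\ uniq mus,
           forall mu, mu \in mus ->
             [/\ mu != 0, X (xs mu) & homog q s E F G f mu (xs mu)]
         & x = \sum_(mu <- mus) xs mu])
  /\
  (forall (mus : seq C) (ys : C -> A),
     uniq mus ->
     (forall mu, mu \in mus -> mu != 0 /\ homog q s E F G f mu (ys mu)) ->
     \sum_(mu <- mus) ys mu = 0 ->
     forall mu, mu \in mus -> ys mu = 0).
Proof.
split.
  by apply: (part1 hbasis htens hrel hDelta hs hq).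
exact: (part2 hbasis).
Qed.
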